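(* Let $\beta_*>0$ be the unique positive solution of $I_2(\beta)=\frac12I_1(\beta)$. If $0<\beta\le\beta_*$, then $$I_\ell(\beta)\le\frac{I_1(\beta)}{\ell}\qquad\text{for all integers }\ell\ge1,$$ and the inequality is strict for every $\ell\ge3$.
   Context: $I_\ell$ denotes the $\ell$-th modified Bessel function of the first kind, $I_\ell(\beta)=\sum_{k\ge0}\frac{1}{k!(k+\ell)!}(\beta/2)^{2k+\ell}$. *)

(* Defs.v *)
From Stdlib Require Import Reals Factorial.
From Coquelicot Require Import Coquelicot.
Open Scope R_scope.

Definition besselI (l : nat) (b : R) : R :=
  Series (fun k : nat => (b / 2) ^ (2 * k + l) / (INR (fact k) * INR (fact (k + l)))).

(* Main.v *)
Require Import Defs.
From Stdlib Require Import Reals Lra Lia Factorial.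
From Coquelicot Require Import Coquelicot.
Open Scope R_scope.

Definition t (l : nat) (b : R) (k : nat) : R :=
  (b / 2) ^ (2 * k + l) / (INR (fact k) * INR (fact (k + l))).

Definition cf (l : nat) (k : nat) : R := / (INR (fact k) * INR (fact (k + l))).

Lemma besselI_t l b : besselI l b = Series (t l b).
Proof. reflexivity. Qed.

Lemma fact_pos' n : 0 < INR (fact n).
Proof. apply lt_0_INR, lt_O_fact. Qed.

Lemma t_eq l b k : t l b k = (b/2)^l * (cf l k * ((b/2)^2)^k).
Proof.
  unfold t, cf. rewrite pow_add, <- pow_mult.
  unfold Rdiv. ring.
Qed.

Lemma cf_radius l : CV_radius (cf l) = p_infty.
Proof.
  apply CV_radius_infinite_DAlembert.
  - intro n. unfold cf. apply Rinv_neq_0_compat.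
    apply Rgt_not_eq, Rmult_lt_0_compat; apply fact_pos'.
  - apply is_lim_seq_le_le with (u := fun _ => 0) (w := fun n => / INR (S n)).
    + intro n. unfold cf.
      replace (S n + l)%nat with (S (n + l)) by lia.
      rewrite !fact_simpl, !mult_INR.
      pose proof (fact_pos' n). pose proof (fact_pos' (n+l)).
      assert (0 < INR (S n)) by (apply lt_0_INR; lia).
      assert (0 < INR (S (n+l))) by (apply lt_0_INR; lia).
      assert (1 <= INR (S (n+l))) by (apply (le_INR 1); lia).
      replace (/ (INR (S n) * INR (fact n) * (INR (S (n + l)) * INR (fact (n + l)))) /
         / (INR (fact n) * INR (fact (n + l)))) with (/ (INR (S n) * INR (S (n+l)))) by (field; lra).
      rewrite Rabs_pos_eq.
      2: { left. apply Rinv_0_lt_compat. apply Rmult_lt_0_compat; lra. }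
      split. { left. apply Rinv_0_lt_compat. apply Rmult_lt_0_compat; lra. }
      apply Rinv_le_contravar; [lra|]. nra.
    + apply is_lim_seq_const.
    + replace (Finite 0) with (Rbar_inv p_infty) by reflexivity.
      apply is_lim_seq_inv. 2: discriminate.
      apply (is_lim_seq_incr_1 INR). apply is_lim_seq_INR.
Qed.

Lemma ex_t l b : ex_series (t l b).
Proof.
  assert (H : ex_pseries (cf l) ((b/2)^2)).
  { apply CV_radius_inside. rewrite cf_radius. exact I. }
  pose proof (@ex_series_scal_l R_AbsRing R_NormedModule ((b/2)^l) _ H) as H'.
  eapply ex_series_ext; [|exact H'].
  intro n. rewrite t_eq. unfold scal; simpl. unfold mult; simpl.
  rewrite (pow_n_pow (b/2*(b/2*1))). ring.
Qed.

Lemma besselI_P l b : besselI l b = (b/2)^l * PSeries (cf l) ((b/2)^2).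
Proof.
  rewrite besselI_t. unfold PSeries. rewrite <- Series_scal_l.
  apply Series_ext. intro n. rewrite t_eq. ring.
Qed.

Lemma cont_half_pow n : continuity (fun b => (b/2)^n).
Proof.
  intro x. apply derivable_continuous_pt.
  apply (derivable_pt_comp (fun b => b/2) (fun y => y^n)).
  - unfold Rdiv. apply derivable_pt_mult. apply derivable_pt_id. apply derivable_pt_const.
  - apply derivable_pt_pow.
Qed.

Lemma cont_besselI l : continuity (besselI l).
Proof.
  intro x. apply continuity_pt_ext with (f := fun b => (b/2)^l * PSeries (cf l) ((b/2)^2)).
  { intro; symmetry; apply besselI_P. }
  apply (continuity_pt_mult (fun b => (b/2)^l) (fun b => PSeries (cf l) ((b/2)^2))).
  - apply cont_half_pow.
  - apply (continuity_pt_comp (fun b => (b/2)^2) (PSeries (cf l))).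
    + apply cont_half_pow.
    + apply PSeries_continuity. rewrite cf_radius. exact I.
Qed.

Lemma Series_zero : Series (fun _ => 0) = 0.
Proof.
  rewrite (Series_ext _ (fun n => 0 * 0)) by (intro; ring).
  rewrite Series_scal_l. ring.
Qed.

Lemma Series_nonneg d : ex_series d -> (forall n, 0 <= d n) -> 0 <= Series d.
Proof.
  intros Hd Hp. rewrite <- Series_zero. apply Series_le; auto.
  intro n; split; [lra | auto].
Qed.

Lemma Series_pos_at m : forall d, ex_series d -> (forall n, 0 <= d n) -> 0 < d m -> 0 < Series d.
Proof.
  induction m as [|m IH]; intros d Hd Hp Hm.
  - rewrite Series_incr_1 by exact Hd.
    pose proof (Series_nonneg (fun k => d (S k)) (proj1 (ex_series_incr_1 d) Hd) (fun n => Hp (S n))).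
    lra.
  - rewrite Series_incr_1 by exact Hd.
    pose proof (IH (fun k => d (S k)) (proj1 (ex_series_incr_1 d) Hd) (fun n => Hp (S n)) Hm).
    pose proof (Hp O). lra.
Qed.

Lemma Series_le' a b : ex_series a -> ex_series b -> (forall n, a n <= b n) -> Series a <= Series b.
Proof.
  intros Ha Hb H.
  assert (0 <= Series (fun n => b n - a n)).
  { apply Series_nonneg. apply (ex_series_minus b a Hb Ha). intro n; specialize (H n); lra. }
  rewrite Series_minus in H0 by assumption. lra.
Qed.

Lemma Series_lt' m a b : ex_series a -> ex_series b -> (forall n, a n <= b n) -> a m < b m ->
  Series a < Series b.
Proof.
  intros Ha Hb H Hm.
  assert (0 < Series (fun n => b n - a n)).
  { apply (Series_pos_at m). apply (ex_series_minus b a Hb Ha). intro n; specialize (H n); lra. lra. }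
  rewrite Series_minus in H0 by assumption. lra.
Qed.

Lemma ex_scal c a : ex_series a -> ex_series (fun n => c * a n).
Proof. intro H. exact (@ex_series_scal_l R_AbsRing R_NormedModule c a H). Qed.

Lemma t_S_l l b k : t (S l) b k = t l b k * (b/2) / INR (k + S l).
Proof.
  unfold t. replace (k + S l)%nat with (S (k + l)) by lia.
  rewrite fact_simpl, mult_INR.
  replace (2 * k + S l)%nat with (S (2*k+l)) by lia. simpl pow.
  pose proof (fact_pos' k). pose proof (fact_pos' (k+l)).
  assert (0 < INR (S (k+l))) by (apply lt_0_INR; lia).
  field. lra.
Qed.

Lemma t_S_k l b k : t l b (S k) = t l b k * ((b/2)^2) / (INR (S k) * INR (S (k + l))).
Proof.
  unfold t. replace (S k + l)%nat with (S (k + l)) by lia.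
  rewrite !fact_simpl, !mult_INR.
  replace (2 * S k + l)%nat with (S (S (2*k+l))) by lia. simpl pow.
  pose proof (fact_pos' k). pose proof (fact_pos' (k+l)).
  assert (0 < INR (S (k+l))) by (apply lt_0_INR; lia).
  assert (0 < INR (S k)) by (apply lt_0_INR; lia).
  field. lra.
Qed.

Lemma t_pos l b k : 0 < b -> 0 < t l b k.
Proof.
  intro Hb. unfold t. apply Rdiv_lt_0_compat.
  apply pow_lt; lra. apply Rmult_lt_0_compat; apply fact_pos'.
Qed.

Lemma diff_series b : besselI 1 b - 2 * besselI 2 b = Series (fun k => t 1 b k - 2 * t 2 b k).
Proof.
  rewrite !besselI_t, <- Series_scal_l, <- Series_minus; auto using ex_t, ex_scal.
Qed.

Lemma M1 b : 0 < b < 2 -> 2 * besselI 2 b < besselI 1 b.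
Proof.
  intro Hb. cut (0 < besselI 1 b - 2 * besselI 2 b). lra.
  rewrite diff_series. apply (Series_pos_at 0).
  - apply (ex_series_minus (t 1 b) (fun k => 2 * t 2 b k)); auto using ex_t, ex_scal.
  - intro n. rewrite (t_S_l 1). pose proof (t_pos 1 b n (proj1 Hb)).
    assert (2 <= INR (n + 2)) by (apply (le_INR 2); lia).
    replace (t 1 b n - 2 * (t 1 b n * (b / 2) / INR (n + 2))) with
      (t 1 b n * ((INR (n+2) - b) / INR (n+2))) by (field; lra).
    apply Rmult_le_pos; [lra|]. apply Rdiv_le_0_compat; lra.
  - rewrite (t_S_l 1). pose proof (t_pos 1 b 0 (proj1 Hb)). simpl (0 + 2)%nat.
    replace (INR 2) with 2 by (simpl; ring).
    replace (t 1 b 0 - 2 * (t 1 b 0 * (b / 2) / 2)) with (t 1 b 0 * ((2 - b)/2)) by field.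
    apply Rmult_lt_0_compat; lra.
Qed.

Lemma t14_tail k : t 1 4 (S (S (S k))) <= 8/9 * (1/5)^k.
Proof.
  induction k as [|k IH].
  - unfold t. simpl. lra.
  - rewrite t_S_k. simpl pow at 2.
    pose proof (t_pos 1 4 (S (S (S k))) ltac:(lra)).
    assert (4 <= INR (S (S (S (S k))))) by (replace 4 with (INR 4) by (simpl; ring); apply le_INR; lia).
    assert (5 <= INR (S (S (S (S k)) + 1))) by (replace 5 with (INR 5) by (simpl; ring); apply le_INR; lia).
    set (T := t 1 4 (S (S (S k)))) in *.
    set (A := INR (S (S (S (S k))))) in *.
    set (B := INR (S (S (S (S k)) + 1))) in *.
    assert (Hd : (4/2)^2 / (A * B) <= 1/5).
    { replace ((4/2)^2) with 4 by (simpl; field).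
      apply Rmult_le_reg_r with (A*B). nra.
      unfold Rdiv. rewrite Rmult_assoc, Rinv_l by nra. nra. }
    assert (0 <= (1/5)^k) by (apply pow_le; lra).
    unfold Rdiv in *. rewrite Rmult_assoc.
    apply Rle_trans with (T * (1 * / 5)). apply Rmult_le_compat_l; lra.
    nra.
Qed.

Lemma M2 : besselI 1 4 < 2 * besselI 2 4.
Proof.
  cut (besselI 1 4 - 2 * besselI 2 4 < 0). lra.
  rewrite diff_series.
  set (d := fun k => t 1 4 k - 2 * t 2 4 k).
  assert (Hd : forall a, ex_series (fun k => d (a + k)%nat)).
  { intro a. apply (ex_series_incr_n d a).
    apply (ex_series_minus (t 1 4) (fun k => 2 * t 2 4 k)); auto using ex_t, ex_scal. }
  assert (E : Series d = d 0%nat + (d 1%nat + (d 2%nat + Series (fun k => d (S (S (S k))))))).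
  { rewrite Series_incr_1 by exact (Hd 0%nat).
    rewrite Series_incr_1 by exact (Hd 1%nat).
    rewrite Series_incr_1 by exact (Hd 2%nat). reflexivity. }
  rewrite E.
  assert (Tl : Series (fun k => d (S (S (S k)))) <= 8/9 * / (1 - 1/5)).
  { rewrite <- Series_geom by (rewrite Rabs_pos_eq; lra).
    rewrite <- Series_scal_l.
    apply Series_le'.
    - exact (Hd 3%nat).
    - apply ex_scal, ex_series_geom. rewrite Rabs_pos_eq; lra.
    - intro n. unfold d. pose proof (t_pos 2 4 (S (S (S n))) ltac:(lra)).
      pose proof (t14_tail n). lra. }
  assert (d 0%nat = -2) by (unfold d, t; simpl; field).
  assert (d 1%nat = -4/3) by (unfold d, t; simpl; field).
  assert (d 2%nat = 0) by (unfold d, t; simpl; field).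
  lra.
Qed.

Lemma M3_term l b n : (2 <= l)%nat -> 0 < b <= 4 ->
  INR (S l) * t (S l) b n <= INR l * t l b n /\
  (n = 1%nat -> INR (S l) * t (S l) b n < INR l * t l b n).
Proof.
  intros Hl Hb. rewrite t_S_l.
  pose proof (t_pos l b n (proj1 Hb)).
  assert (2 <= INR l) by (replace 2 with (INR 2) by (simpl; ring); apply le_INR; lia).
  assert (0 < INR (S l)) by (apply lt_0_INR; lia).
  assert (INR (S l) <= INR (n + S l)) by (apply le_INR; lia).
  set (T := t l b n) in *.
  replace (INR (S l) * (T * (b / 2) / INR (n + S l))) with
    (T * (b/2) * (INR (S l) / INR (n + S l))) by (field; lra).
  assert (Hr : 0 < INR (S l) / INR (n + S l) <= 1).
  { split. apply Rdiv_lt_0_compat; lra.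
    apply Rmult_le_reg_r with (INR (n + S l)); [lra|].
    unfold Rdiv; rewrite Rmult_assoc, Rinv_l by lra. lra. }
  split.
  - apply Rle_trans with (T * (b/2)).
    rewrite <- (Rmult_1_r (T * (b/2))) at 2. apply Rmult_le_compat_l; [|lra].
    apply Rmult_le_pos; lra.
    rewrite Rmult_comm. apply Rmult_le_compat_r; lra.
  - intros ->.
    assert (Hr1 : INR (S l) / INR (1 + S l) < 1).
    { assert (INR (S l) < INR (1 + S l)) by (apply lt_INR; lia).
      apply Rmult_lt_reg_r with (INR (1 + S l)); [lra|].
      unfold Rdiv; rewrite Rmult_assoc, Rinv_l by lra. lra. }
    apply Rlt_le_trans with (T * (b/2)).
    rewrite <- (Rmult_1_r (T * (b/2))) at 2. apply Rmult_lt_compat_l; [|lra].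
    apply Rmult_lt_0_compat; lra.
    rewrite Rmult_comm. apply Rmult_le_compat_r; lra.
Qed.

Lemma M3 l b : (2 <= l)%nat -> 0 < b <= 4 ->
  INR (S l) * besselI (S l) b < INR l * besselI l b.
Proof.
  intros Hl Hb. rewrite !besselI_t, <- !Series_scal_l.
  apply (Series_lt' 1); auto using ex_t, ex_scal.
  - intro n. apply (M3_term l b n Hl Hb).
  - apply (M3_term l b 1 Hl Hb). reflexivity.
Qed.

Lemma M4 l b : (3 <= l)%nat -> 0 < b <= 4 -> INR l * besselI l b < 2 * besselI 2 b.
Proof.
  intros Hl Hb. induction l as [|l IH]; [lia|].
  destruct (Nat.eq_dec l 2) as [->|Hne].
  - replace 2 with (INR 2) at 2 by (simpl; ring). apply M3; auto.
  - eapply Rlt_trans. apply M3; [lia|auto]. apply IH. lia.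
Qed.

Lemma contF : continuity (fun b => 2 * besselI 2 b - besselI 1 b).
Proof.
  intro x.
  apply (continuity_pt_minus (mult_real_fct 2 (besselI 2)) (besselI 1)).
  apply continuity_pt_scal. apply cont_besselI. apply cont_besselI.
Qed.

Theorem lemma3p1 (beta_star : R)
  (Hpos : 0 < beta_star)
  (Hsol : besselI 2 beta_star = / 2 * besselI 1 beta_star)
  (Huniq : forall b : R, 0 < b -> besselI 2 b = / 2 * besselI 1 b -> b = beta_star)
  (beta : R) (Hb0 : 0 < beta) (Hb1 : beta <= beta_star) :
  (forall l : nat, (1 <= l)%nat -> besselI l beta <= besselI 1 beta / INR l) /\
  (forall l : nat, (3 <= l)%nat -> besselI l beta < besselI 1 beta / INR l).
Proof.
  set (F := fun b => 2 * besselI 2 b - besselI 1 b).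
  assert (F1 : F 1 < 0) by (unfold F; pose proof (M1 1 ltac:(lra)); lra).
  assert (F4 : 0 < F 4) by (unfold F; pose proof M2; lra).
  assert (Bs : beta_star <= 4).
  { destruct (Rle_dec beta_star 4) as [|Hn]; [assumption|].
    destruct (IVT F 1 4 contF ltac:(lra) F1 F4) as [z [Hz Fz]].
    unfold F in Fz. assert (z = beta_star) by (apply Huniq; lra). lra. }
  assert (G : 2 * besselI 2 beta <= besselI 1 beta).
  { destruct (Rlt_dec beta 2) as [Hlt|Hge].
    - left. apply M1. lra.
    - destruct (Rle_dec (2 * besselI 2 beta) (besselI 1 beta)) as [|Hn]; [assumption|].
      exfalso.
      assert (Fb : 0 < F beta) by (unfold F; lra).
      destruct (IVT F 1 beta contF ltac:(lra) F1 Fb) as [z [Hz Fz]].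
      unfold F in Fz. assert (z = beta_star) by (apply Huniq; lra).
      assert (beta = beta_star) by lra. subst beta.
      unfold F in Fb. lra. }
  assert (S3 : forall l, (3 <= l)%nat -> besselI l beta < besselI 1 beta / INR l).
  { intros l Hl. pose proof (M4 l beta Hl ltac:(lra)).
    assert (0 < INR l) by (apply lt_0_INR; lia).
    apply Rmult_lt_reg_l with (INR l); [lra|].
    replace (INR l * (besselI 1 beta / INR l)) with (besselI 1 beta) by (field; lra).
    lra. }
  split; [|exact S3].
  intros l Hl.
  destruct l as [|[|[|l]]]; [lia| | |].
  - simpl INR. lra.
  - replace (INR 2) with 2 by (simpl; ring). lra.
  - left. apply S3. lia.
Qed.
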